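(* Let $\alpha\in\mathbb{N}_0$. For all $y\in C^{(2\alpha+4)}(0,\infty)$ and $x>0$, $$(-1)^{\alpha+1}x^2(x^{-1}D_x)^{2\alpha+4}\big[x^{2\alpha+2}y(x)\big]=(-1)^{\alpha+1}\sum_{i=1}^{2\alpha+4}A_i^{\alpha}x^{i-2\alpha-4}D_x^iy(x),$$ where $$A_i^{\alpha}=\frac{(\alpha+1)!}{(i-1)!}\sum_{j=\max(i,\alpha+3)}^{2\alpha+4}(-1)^{i+j}\binom{2\alpha+4}{j}\frac{(2j-i-1)!\,2^{i-2j+2\alpha+4}}{(j-\alpha-3)!\,(j-i)!}.$$
   Context: $D_x^i$ is the $i$-fold derivative; $(x^{-1}D_x)^k$ is the $k$-fold application of $y\mapsto x^{-1}y'$. *)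

(* Defs.v *)
From Stdlib Require Import Reals ZArith Arith.
Open Scope R_scope.

Definition is_deriv_seq (N : nat) (f : R -> R) (d : nat -> R -> R) : Prop :=
  (forall x, 0 < x -> d 0%nat x = f x) /\
  (forall (k : nat) (x : R), (k < N)%nat -> 0 < x ->
     derivable_pt_lim (d k) x (d (S k) x)).

Definition is_CN_on_pos (N : nat) (y : R -> R) (d : nat -> R -> R) : Prop :=
  is_deriv_seq N y d /\ (forall x, 0 < x -> continuity_pt (d N) x).

Definition is_xinvD_seq (N : nat) (g : R -> R) (e : nat -> R -> R) : Prop :=
  (forall x, 0 < x -> e 0%nat x = g x) /\
  (forall (k : nat) (x : R), (k < N)%nat -> 0 < x ->
     exists l, derivable_pt_lim (e k) x l /\ e (S k) x = / x * l).

Definition A_coef (alpha i : nat) : R :=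
  INR (fact (alpha + 1)) / INR (fact (i - 1)) *
  sum_f (Nat.max i (alpha + 3)) (2 * alpha + 4) (fun j =>
    (-1) ^ (i + j) * Binomial.C (2 * alpha + 4) j *
    (INR (fact (2 * j - i - 1)) *
     powerRZ 2 (Z.of_nat i - 2 * Z.of_nat j + 2 * Z.of_nat alpha + 4)%Z)
    / (INR (fact (j - alpha - 3)) * INR (fact (j - i)))).

(* Main.v *)
Require Import Defs.
From Stdlib Require Import Reals ZArith Arith Lia Lra.
Open Scope R_scope.

Fixpoint sm (n : nat) (f : nat -> R) : R :=
  match n with O => 0 | S n' => sm n' f + f n' end.

Lemma sm_ext n f g : (forall i, (i < n)%nat -> f i = g i) -> sm n f = sm n g.
Proof.
  induction n; simpl; intros H; auto.
  rewrite IHn by (intros; apply H; lia). rewrite H by lia. auto.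
Qed.

Lemma sm_plus n f g : sm n (fun i => f i + g i) = sm n f + sm n g.
Proof. induction n; simpl; [ring| rewrite IHn; ring]. Qed.

Lemma sm_scal n c f : sm n (fun i => c * f i) = c * sm n f.
Proof. induction n; simpl; [ring| rewrite IHn; ring]. Qed.

Lemma sm_first n f : sm (S n) f = f O + sm n (fun i => f (S i)).
Proof. induction n; simpl in *; [ring| rewrite IHn; ring]. Qed.

Lemma sm_zero n f : (forall i, (i < n)%nat -> f i = 0) -> sm n f = 0.
Proof.
  induction n; simpl; intros H; [ring|]. rewrite IHn by (intros; apply H; lia).
  rewrite H by lia. ring.
Qed.

Lemma sm_rev n f : sm n f = sm n (fun i => f (n - 1 - i)%nat).
Proof.
  induction n; auto.
  rewrite (sm_first n (fun i => f (S n - 1 - i)%nat)).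
  change (sm (S n) f) with (sm n f + f n). rewrite IHn.
  replace (S n - 1 - 0)%nat with n by lia.
  rewrite Rplus_comm. f_equal. apply sm_ext. intros. f_equal. lia.
Qed.

Lemma sm_sum_f_R0 n f : sm (S n) f = sum_f_R0 f n.
Proof. induction n; simpl in *; [ring| rewrite IHn; ring]. Qed.

Fixpoint b (m : R) (k i : nat) : R :=
  match k with
  | O => match i with O => 1 | _ => 0 end
  | S k' => (m - 2 * INR k' + INR i) * b m k' i +
            match i with O => 0 | S i' => b m k' i' end
  end.

Lemma b_hi m k i : (k < i)%nat -> b m k i = 0.
Proof.
  revert i; induction k; intros i H; simpl.
  - destruct i; [lia|auto].
  - destruct i; [lia|]. rewrite IHk by lia. rewrite IHk by lia. ring.
Qed.

Definition bp (m : R) (k i : nat) : R := match i with O => 0 | S i' => b m k i' end.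

Lemma b_S m k i : b m (S k) i = (m - 2 * INR k + INR i) * b m k i + bp m k i.
Proof. reflexivity. Qed.

Fixpoint bin (k l : nat) : R :=
  match k with
  | O => match l with O => 1 | _ => 0 end
  | S k' => bin k' l + match l with O => 0 | S l' => bin k' l' end
  end.

Lemma bin_hi k l : (k < l)%nat -> bin k l = 0.
Proof.
  revert l; induction k; intros l H; simpl.
  - destruct l; [lia|auto].
  - destruct l; [lia|]. rewrite IHk by lia. rewrite IHk by lia. ring.
Qed.

Fixpoint ff (p l : nat) : R :=
  match l with O => 1 | S l' => ff p l' * (INR p - INR l') end.

Lemma leibniz p k : forall i,
  b (2 * INR p) k i = sm (S k) (fun l => bin k l * 2 ^ l * ff p l * b 0 (k - l) i).
Proof.
  induction k; intros i.
  - simpl. destruct i; ring.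
  - assert (Hbp : bp (2 * INR p) k i =
       sm (S k) (fun l => bin k l * 2 ^ l * ff p l * bp 0 (k - l) i)).
    { destruct i; simpl bp.
      + symmetry; apply sm_zero; intros; simpl; ring.
      + apply IHk. }
    rewrite b_S, Hbp, IHk.
    rewrite (sm_ext (S (S k)) _ (fun l => bin k l * 2 ^ l * ff p l * b 0 (S k - l) i
        + (match l with O => 0 | S l' => bin k l' end) * 2 ^ l * ff p l * b 0 (S k - l) i))
      by (intros; simpl; ring).
    rewrite sm_plus.
    rewrite (sm_first (S k) (fun l => (match l with O => 0 | S l' => bin k l' end) * 2 ^ l * ff p l * b 0 (S k - l) i)).
    change (sm (S (S k)) (fun l => bin k l * 2 ^ l * ff p l * b 0 (S k - l) i))
      with (sm (S k) (fun l => bin k l * 2 ^ l * ff p l * b 0 (S k - l) i)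
            + bin k (S k) * 2 ^ (S k) * ff p (S k) * b 0 (S k - S k) i).
    rewrite (bin_hi k (S k)) by lia.
    rewrite <- sm_scal.
    rewrite (sm_ext (S k) (fun l => bin k l * 2 ^ l * ff p l * b 0 (S k - l) i)
      (fun l => bin k l * 2 ^ l * ff p l * ((0 - 2 * INR (k - l) + INR i) * b 0 (k - l) i + bp 0 (k - l) i))).
    2:{ intros l Hl. replace (S k - l)%nat with (S (k - l)) by lia. rewrite b_S. ring. }
    simpl (match 0%nat with O => 0 | S l' => bin k l' end).
    rewrite <- sm_plus.
    match goal with |- _ = ?A + ?B + (?C + ?D) => replace (A + B + (C + D)) with (A + D) by ring end.
    rewrite <- sm_plus.
    apply sm_ext. intros l Hl. rewrite minus_INR by lia.
    simpl (match S l with O => 0 | S l' => bin k l' end). simpl ff. simpl pow.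
    replace (S k - S l)%nat with (k - l)%nat by lia. ring.
Qed.

Definition cBe (a c : nat) : R :=
  (-1) ^ c * INR (fact (a + 2 * c)) / (2 ^ c * INR (fact a) * INR (fact c)).

Lemma factS n : INR (fact (S n)) = (INR n + 1) * INR (fact n).
Proof. change (fact (S n)) with (S n * fact n)%nat. rewrite mult_INR, S_INR. ring. Qed.

Lemma b0_r0 r : b 0 (S r) 0 = 0.
Proof.
  induction r.
  - simpl. ring.
  - rewrite b_S, IHr. simpl bp. ring.
Qed.

Lemma INRp1_neq n : INR n + 1 <> 0.
Proof. pose proof (pos_INR n). lra. Qed.

Lemma cBe_0 a : cBe a 0 = 1.
Proof.
  unfold cBe. rewrite Nat.mul_0_r, Nat.add_0_r. simpl.
  field. apply INR_fact_neq_0.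
Qed.

Lemma E1 c0 : cBe 0 (S c0) = (0 - 2 * INR (S c0) + INR 1) * cBe 0 c0.
Proof.
  unfold cBe.
  replace (0 + 2 * S c0)%nat with (S (S (2 * c0))) by lia.
  replace (0 + 2 * c0)%nat with (2 * c0)%nat by lia.
  rewrite !factS. rewrite !S_INR, !mult_INR. change (INR 1) with 1. change (INR 2) with 2.
  change (fact 0) with 1%nat. change (INR 1) with 1. simpl pow.
  change (INR 0) with 0. field. repeat split; try apply INR_fact_neq_0; try apply pow_nonzero; try lra.
  pose proof (pos_INR c0); lra.
Qed.

Lemma E2 a0 c0 : cBe (S a0) (S c0) =
  (0 - 2 * INR (S (S a0 + c0)) + INR (S (S a0))) * cBe (S a0) c0 + cBe a0 (S c0).
Proof.
  unfold cBe.
  replace (S a0 + 2 * S c0)%nat with (S (S (S (a0 + 2 * c0)))) by lia.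
  replace (S a0 + 2 * c0)%nat with (S (a0 + 2 * c0)) by lia.
  replace (a0 + 2 * S c0)%nat with (S (S (a0 + 2 * c0))) by lia.
  rewrite !factS. rewrite !S_INR, !plus_INR, !mult_INR. change (INR 2) with 2. simpl pow.
  rewrite ?S_INR. field. repeat split; try apply INR_fact_neq_0; try apply pow_nonzero; try lra;
  pose proof (pos_INR c0); pose proof (pos_INR a0); lra.
Qed.

Lemma bp_S m k i : bp m k (S i) = b m k i.
Proof. reflexivity. Qed.

Lemma b0_cl r : forall a c, r = (a + c)%nat -> b 0 (S r) (S a) = cBe a c.
Proof.
  induction r; intros a c H.
  - assert (a = 0%nat) by lia. assert (c = 0%nat) by lia. subst.
    rewrite cBe_0. simpl. ring.
  - rewrite b_S, bp_S.
    destruct c as [|c0].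
    + rewrite b_hi by lia. rewrite Nat.add_0_r in H. subst a.
      rewrite (IHr r 0%nat) by lia. rewrite !cBe_0. ring.
    + rewrite (IHr a c0) by lia.
      destruct a as [|a0].
      * rewrite b0_r0. assert (r = c0) by lia. subst r. rewrite E1. ring.
      * rewrite (IHr a0 (S c0)) by lia. assert (r = (a0 + S c0)%nat) by lia.
        subst r. rewrite E2. replace (S (S a0 + c0)) with (S (a0 + S c0)) by lia. ring.
Qed.

Lemma bin_k0 k : bin k 0 = 1.
Proof. induction k; simpl; auto. rewrite IHk; ring. Qed.

Lemma C_n0 n : Binomial.C n 0 = 1.
Proof. unfold Binomial.C. rewrite Nat.sub_0_r. simpl fact. simpl INR. field. apply INR_fact_neq_0. Qed.

Lemma C_nn n : Binomial.C n n = 1.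
Proof. unfold Binomial.C. rewrite Nat.sub_diag. simpl fact. simpl INR. field. apply INR_fact_neq_0. Qed.

Lemma bin_C k : forall l, (l <= k)%nat -> bin k l = Binomial.C k l.
Proof.
  induction k; intros l H.
  - assert (l = 0%nat) by lia. subst. simpl. rewrite C_n0. auto.
  - destruct l as [|l'].
    + rewrite bin_k0, C_n0. auto.
    + simpl bin. destruct (Nat.eq_dec l' k).
      * subst. rewrite bin_hi by lia. rewrite IHk by lia. rewrite !C_nn. ring.
      * rewrite !IHk by lia. rewrite Rplus_comm. apply pascal. lia.
Qed.

Lemma ff_val p l : (l <= p)%nat -> ff p l = INR (fact p) / INR (fact (p - l)).
Proof.
  induction l; intros H.
  - simpl. rewrite Nat.sub_0_r. field. apply INR_fact_neq_0.
  - simpl ff. rewrite IHl by lia.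
    replace (p - l)%nat with (S (p - S l)) by lia.
    rewrite factS. rewrite <- minus_INR by lia.
    replace (INR (p - S l) + 1) with (INR (S (p - S l))) by (rewrite S_INR; ring).
    replace (S (p - S l)) with (p - l)%nat by lia.
    field. split; [apply INR_fact_neq_0|]. apply not_0_INR. lia.
Qed.

Lemma ff_hi p l : (p < l)%nat -> ff p l = 0.
Proof.
  intros H. replace l with (S p + (l - S p))%nat by lia.
  generalize (l - S p)%nat. induction n.
  - rewrite Nat.add_0_r. simpl. ring.
  - replace (S p + S n)%nat with (S (S p + n)) by lia. simpl ff. simpl ff in IHn.
    rewrite IHn. ring.
Qed.

Lemma sm_split a c g : sm (a + c) g = sm a g + sm c (fun x => g (x + a)%nat).
Proof.
  induction c.
  - rewrite Nat.add_0_r. simpl. ring.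
  - replace (a + S c)%nat with (S (a + c)) by lia. simpl. rewrite IHc.
    replace (c + a)%nat with (a + c)%nat by lia. ring.
Qed.

Lemma b_N0 alpha : b (INR (2 * alpha + 2)) (2 * alpha + 4) 0 = 0.
Proof.
  replace (INR (2 * alpha + 2)) with (2 * INR (alpha + 1))
    by (rewrite !plus_INR, mult_INR; simpl; ring).
  rewrite leibniz. apply sm_zero. intros l Hl.
  destruct (Nat.eq_dec l (2 * alpha + 4)).
  - subst. rewrite ff_hi by lia. ring.
  - replace (2 * alpha + 4 - l)%nat with (S (2 * alpha + 4 - l - 1)) by lia.
    rewrite b0_r0. ring.
Qed.

Lemma b_A alpha i : (1 <= i <= 2 * alpha + 4)%nat ->
  b (INR (2 * alpha + 2)) (2 * alpha + 4) i = A_coef alpha i.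
Proof.
  intros Hi.
  set (N := (2 * alpha + 4)%nat).
  set (s := Nat.max i (alpha + 3)).
  assert (Hs : (s <= N)%nat) by (unfold s, N; lia).
  replace (INR (2 * alpha + 2)) with (2 * INR (alpha + 1))
    by (rewrite !plus_INR, mult_INR; simpl; ring).
  rewrite leibniz. rewrite sm_rev.
  replace (S N) with (s + S (N - s))%nat by lia.
  rewrite sm_split.
  rewrite sm_zero.
  2:{ intros j Hj. replace (s + S (N - s) - 1 - j)%nat with (N - j)%nat by lia.
      destruct (Nat.lt_ge_cases j i).
      - rewrite (b_hi 0 (N - (N - j)) i) by lia. ring.
      - rewrite ff_hi by (unfold s in Hj; lia). ring. }
  rewrite Rplus_0_l.
  unfold A_coef. fold N. fold s. unfold sum_f. rewrite <- sm_sum_f_R0.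
  replace (S (N - s)) with (S (N - s)) by reflexivity.
  rewrite <- sm_scal. apply sm_ext. intros x Hx.
  replace (s + S (N - s) - 1 - (x + s))%nat with (N - (x + s))%nat by lia.
  set (j := (x + s)%nat) in *.
  assert (Hj1 : (i <= j)%nat) by (unfold j, s; lia).
  assert (Hj2 : (alpha + 3 <= j)%nat) by (unfold j, s; lia).
  assert (Hj3 : (j <= N)%nat) by (unfold j; lia).
  clearbody j. clear Hx.
  destruct i as [|a]; [lia|].
  set (c := (j - S a)%nat). set (u := (j - alpha - 3)%nat).
  set (l := (N - j)%nat).
  replace (N - l)%nat with (S (a + c)) by (unfold l, c; lia).
  rewrite (b0_cl (a + c) a c) by reflexivity.
  rewrite bin_C by (unfold l; lia).
  rewrite pascal_step1 by (unfold l; lia).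
  replace (N - l)%nat with j by (unfold l; lia).
  rewrite ff_val by (unfold l, N; lia).
  replace (alpha + 1 - l)%nat with u by (unfold l, u, N; lia).
  replace (2 * j - S a - 1)%nat with (a + 2 * c)%nat by (unfold c; lia).
  replace (S a - 1)%nat with a by lia.
  fold c. fold u.
  replace (Z.of_nat (S a) - 2 * Z.of_nat j + 2 * Z.of_nat alpha + 4)%Z
    with (Z.of_nat l + - Z.of_nat c)%Z by (unfold l, c, N; lia).
  rewrite powerRZ_add by lra. rewrite powerRZ_neg', <- !pow_powerRZ.
  replace (S a + j)%nat with (2 * S a + c)%nat by (unfold c; lia).
  rewrite pow_add, pow_1_even.
  unfold cBe.
  field. repeat split; try apply INR_fact_neq_0; try apply pow_nonzero; lra.
Qed.

Lemma deriv_loc (f g : R -> R) x l :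
  (forall t, 0 < t -> f t = g t) -> 0 < x ->
  derivable_pt_lim g x l -> derivable_pt_lim f x l.
Proof.
  intros Heq Hx Hg eps He.
  destruct (Hg eps He) as [del Hd].
  assert (Hp : 0 < Rmin del x) by (apply Rmin_pos; [apply cond_pos|lra]).
  exists (mkposreal _ Hp). intros h Hh0 Hh. simpl in Hh.
  assert (Ha : Rabs h < del) by (pose proof (Rmin_l del x); lra).
  assert (Hb : Rabs h < x) by (pose proof (Rmin_r del x); lra).
  rewrite (Heq x Hx), (Heq (x + h)).
  - apply Hd; auto.
  - pose proof (Rle_abs (-h)). rewrite Rabs_Ropp in H. lra.
Qed.

Lemma powerRZ_m1 x : x <> 0 -> powerRZ x (-1) = / x.
Proof. intros. simpl. rewrite Rmult_1_r. auto. Qed.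

Lemma deriv_powerRZ z x : 0 < x ->
  derivable_pt_lim (fun t => powerRZ t z) x (IZR z * powerRZ x z / x).
Proof.
  intros Hx.
  apply (deriv_loc _ (fun t => Rpower t (IZR z))).
  - intros t Ht. apply powerRZ_Rpower. auto.
  - auto.
  - replace (IZR z * powerRZ x z / x) with (IZR z * Rpower x (IZR z - 1)).
    + apply derivable_pt_lim_power. auto.
    + replace (IZR z - 1) with (IZR (z + -1)) by (rewrite plus_IZR; simpl; ring).
      rewrite <- powerRZ_Rpower by auto. rewrite powerRZ_add by lra.
      rewrite powerRZ_m1 by lra. unfold Rdiv. ring.
Qed.

Lemma deriv_sm n (f : nat -> R -> R) (f' : nat -> R) x :
  (forall i, (i < n)%nat -> derivable_pt_lim (f i) x (f' i)) ->
  derivable_pt_lim (fun t => sm n (fun i => f i t)) x (sm n f').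
Proof.
  induction n; intros H; simpl.
  - apply (derivable_pt_lim_const 0).
  - apply (derivable_pt_lim_plus (fun t => sm n (fun i => f i t)) (f n)).
    + apply IHn. intros; apply H; lia.
    + apply H; lia.
Qed.

Lemma sm_last n f : sm (S n) f = sm n f + f n.
Proof. reflexivity. Qed.

Definition zk (m k i : nat) : Z := (Z.of_nat m - 2 * Z.of_nat k + Z.of_nat i)%Z.

Definition SS (d : nat -> R -> R) (m k : nat) (x : R) : R :=
  sm (S k) (fun i => b (INR m) k i * powerRZ x (zk m k i) * d i x).

Lemma IZR_zk m k i : IZR (zk m k i) = INR m - 2 * INR k + INR i.
Proof. unfold zk. rewrite plus_IZR, minus_IZR, mult_IZR, <- !INR_IZR_INZ. simpl. ring. Qed.

Lemma SS_deriv (d : nat -> R -> R) m k x : 0 < x ->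
  (forall i, (i <= k)%nat -> derivable_pt_lim (d i) x (d (S i) x)) ->
  derivable_pt_lim (SS d m k) x (x * SS d m (S k) x).
Proof.
  intros Hx Hd. unfold SS at 1.
  set (F := fun i t => b (INR m) k i * powerRZ t (zk m k i) * d i t).
  change (derivable_pt_lim (fun t => sm (S k) (fun i => F i t)) x (x * SS d m (S k) x)).
  set (F' := fun i => b (INR m) k i * (IZR (zk m k i) * powerRZ x (zk m k i) / x) * d i x
                      + b (INR m) k i * powerRZ x (zk m k i) * d (S i) x).
  replace (x * SS d m (S k) x) with (sm (S k) F').
  - apply deriv_sm. intros i Hi. unfold F, F'.
    apply (derivable_pt_lim_mult (mult_real_fct (b (INR m) k i) (fun t => powerRZ t (zk m k i))) (d i)).
    + apply derivable_pt_lim_scal. apply deriv_powerRZ. auto.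
    + apply Hd. lia.
  - unfold SS.
    rewrite (sm_ext (S (S k)) _ (fun i =>
       (INR m - 2 * INR k + INR i) * b (INR m) k i * powerRZ x (zk m (S k) i) * d i x
       + bp (INR m) k i * powerRZ x (zk m (S k) i) * d i x))
      by (intros; rewrite b_S; ring).
    rewrite sm_plus.
    rewrite (sm_first (S k) (fun i => bp (INR m) k i * powerRZ x (zk m (S k) i) * d i x)).
    rewrite (sm_last (S k) (fun i => (INR m - 2 * INR k + INR i) * b (INR m) k i * powerRZ x (zk m (S k) i) * d i x)).
    rewrite (b_hi _ k (S k)) by lia. simpl bp.
    rewrite Rmult_0_r, Rmult_0_l, Rmult_0_l, Rmult_0_l, Rmult_0_l, Rplus_0_r, Rplus_0_l.
    rewrite <- sm_plus, <- sm_scal. apply sm_ext. intros i Hi. unfold F'.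
    try rewrite bp_S.
    replace (zk m (S k) i) with (zk m k i + -2)%Z by (unfold zk; lia).
    replace (zk m (S k) (S i)) with (zk m k i + -1)%Z by (unfold zk; lia).
    rewrite !powerRZ_add by lra. rewrite powerRZ_m1 by lra.
    replace (powerRZ x (-2)) with (/ x * / x)
      by (simpl; field; lra).
    rewrite IZR_zk. field. lra.
Qed.

Theorem corollary5p2 (alpha : nat) (y : R -> R) (d : nat -> R -> R) :
  is_CN_on_pos (2 * alpha + 4) y d ->
  (exists e, is_xinvD_seq (2 * alpha + 4)
               (fun x => x ^ (2 * alpha + 2) * y x) e) /\
  (forall e, is_xinvD_seq (2 * alpha + 4)
               (fun x => x ^ (2 * alpha + 2) * y x) e ->
   forall x, 0 < x ->
     (-1) ^ (alpha + 1) * x ^ 2 * e (2 * alpha + 4)%nat x =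
     (-1) ^ (alpha + 1) *
       sum_f 1 (2 * alpha + 4) (fun i =>
         A_coef alpha i *
         powerRZ x (Z.of_nat i - 2 * Z.of_nat alpha - 4)%Z * d i x)).
Proof.
  intros [[Hd0 Hds] _].
  set (m := (2 * alpha + 2)%nat).
  set (N := (2 * alpha + 4)%nat).
  assert (H0 : forall x, 0 < x -> SS d m 0 x = x ^ m * y x).
  { intros x Hx. unfold SS. simpl sm. simpl b.
    replace (zk m 0 0) with (Z.of_nat m) by (unfold zk; lia).
    rewrite <- pow_powerRZ, Hd0 by auto. ring. }
  assert (HS : forall k x, (k < N)%nat -> 0 < x ->
            derivable_pt_lim (SS d m k) x (x * SS d m (S k) x)).
  { intros k x Hk Hx. apply SS_deriv; auto. intros i Hi. apply Hds; [lia|auto]. }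
  split.
  - exists (SS d m). split.
    + exact H0.
    + intros k x Hk Hx. exists (x * SS d m (S k) x). split.
      * apply HS; auto.
      * field. lra.
  - intros e [He0 HeS].
    assert (Hk : forall k, (k <= N)%nat -> forall x, 0 < x -> e k x = SS d m k x).
    { induction k; intros Hk x Hx.
      - rewrite He0, H0 by auto. auto.
      - destruct (HeS k x) as [l [Hl El]]; [lia|auto|].
        rewrite El.
        assert (Hd' : derivable_pt_lim (e k) x (x * SS d m (S k) x)).
        { apply (deriv_loc _ (SS d m k)).
          - intros t Ht. apply IHk; [lia|auto].
          - auto.
          - apply HS; [lia|auto]. }
        rewrite (uniqueness_limite _ _ _ _ Hl Hd'). field. lra. }
    intros x Hx. rewrite (Hk N) by (auto; lia).
    rewrite Rmult_assoc. f_equal.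
    unfold SS, m, N. rewrite sm_first. rewrite b_N0. rewrite Rmult_0_l, Rmult_0_l, Rplus_0_l.
    unfold sum_f. rewrite <- sm_sum_f_R0.
    replace (S (2 * alpha + 4 - 1)) with (2 * alpha + 4)%nat by lia.
    rewrite <- sm_scal. apply sm_ext. intros i Hi.
    rewrite Nat.add_1_r. rewrite b_A by lia.
    replace (zk (2 * alpha + 2) (2 * alpha + 4) (S i)) with ((Z.of_nat (S i) - 2 * Z.of_nat alpha - 4) + -2)%Z
      by (unfold zk; lia).
    rewrite powerRZ_add by lra.
    replace (powerRZ x (-2)) with (/ x * / x) by (simpl; field; lra).
    simpl pow. field. lra.
Qed.
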